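(* Let $k$ be an odd integer, $n\ge k\ge1$ and $1\le i^\circ\le n$. Then there exists an invertible linear map $S_{i^\circ}:M_{n\times k}(\mathbb F)\to M_{n\times k}(\mathbb F)$ such that: (S1) if $X\in M_{n\times k}(\mathbb F)$ and $\mathbf z\in\mathbb F^n$ satisfy $\mathbf z^tX=0$, then $(\mathbf z^\circ)^tS_{i^\circ}(X)=0$, where $\mathbf z^\circ=(\mathbf z_{i^\circ},\dots,\mathbf z_n,(-1)^{n+k+1}\mathbf z_1,\dots,(-1)^{n+k+1}\mathbf z_{i^\circ-1})^t$; (S2) $\det_{n,k}(X)=0$ implies $\det_{n,k}(S_{i^\circ}(X))=0$; (S3) for all $X\in M_{n\times k}(\mathbb F)$, if $\sum_{i=1}^n(-1)^i\big(S_{i^\circ}(X)\big)[i|)=0$ then $\sum_{i=1}^n(-1)^iX[i|)=0$.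
   Context: $X[i|)$ denotes the $i$-th row of $X$. Cullis' determinant: for $n\ge k$, $\det_{n,k}(X)=\sum_{c}\operatorname{sgn}(c)\det(X[c|))$, sum over $k$-subsets $c=\{c(1)<\dots<c(k)\}$ of $[n]$, $X[c|)$ the submatrix of rows in $c$, $\operatorname{sgn}(c)=(-1)^{\sum_{\alpha=1}^k(c(\alpha)-\alpha)}$. *)

(* Defs.v *)
From HB Require Import structures.
From mathcomp Require Import all_boot all_order all_algebra all_fingroup.
Set Implicit Arguments. Unset Strict Implicit. Unset Printing Implicit Defensive.
Import Order.TTheory GRing.Theory Num.Theory.
Local Open Scope ring_scope.

(* Indices are 0-based: row i : 'I_n of a matrix corresponds to row i+1 of the paper. *)

(* A k-subset c = {c(1) < ... < c(k)} of [n] is encoded as a strictly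
   increasing map c : 'I_k -> 'I_n. *)
Definition incr_map (n k : nat) (c : {ffun 'I_k -> 'I_n}) : bool :=
  [forall a : 'I_k, forall b : 'I_k, (a < b)%N ==> (c a < c b)%N].

(* sgn(c) = (-1)^(sum_alpha (c(alpha) - alpha)); shifting both to 0-based
   indexing leaves each difference unchanged. *)
Definition cullis_sign (F : ringType) (n k : nat) (c : {ffun 'I_k -> 'I_n}) : F :=
  (-1) ^+ (\sum_(a < k) (c a - a))%N.

Definition rowsub_of (F : Type) (n k : nat) (X : 'M[F]_(n, k))
  (c : {ffun 'I_k -> 'I_n}) : 'M[F]_k :=
  \matrix_(a < k, j < k) X (c a) j.

Definition cullis_det (F : comRingType) (n k : nat) (X : 'M[F]_(n, k)) : F :=
  \sum_(c : {ffun 'I_k -> 'I_n} | incr_map c) cullis_sign F c * \det (rowsub_of X c).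

Lemma ord_pos (n : nat) (j : 'I_n) : (0 < n)%N.
Proof. by case: n j => [[]|]. Qed.

Definition rot_ord (n : nat) (i0 j : 'I_n) : 'I_n :=
  Ordinal (ltn_pmod (i0 + j) (ord_pos j)).

(* z° = (z_{i°}, ..., z_n, (-1)^(n+k+1) z_1, ..., (-1)^(n+k+1) z_{i°-1}),
   with i0 = i° - 1 (0-based), as a row vector. *)
Definition zcirc (F : ringType) (n k : nat) (i0 : 'I_n) (z : 'rV[F]_n) : 'rV[F]_n :=
  \row_(j < n) ((if (i0 + j < n)%N then 1 else (-1) ^+ (n + k + 1)) * z 0 (rot_ord i0 j)).

(* sum_{i=1}^n (-1)^i X[i|) ; 0-based row i is paper row i+1 *)
Definition alt_row_sum (F : ringType) (n k : nat) (X : 'M[F]_(n, k)) : 'rV[F]_k :=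
  \sum_(i < n) (-1) ^+ i.+1 *: row i X.

(* Main.v *)
Require Import Defs.
From HB Require Import structures.
From mathcomp Require Import all_boot all_order all_algebra all_fingroup.
From mathcomp Require Import zify ring.
Set Implicit Arguments. Unset Strict Implicit. Unset Printing Implicit Defensive.
Import GRing.Theory.
Local Open Scope ring_scope.

Section Aux.
Variable N : nat.

Definition nxt (j : 'I_N.+1) : 'I_N.+1 := inord (if (j < N)%N then j.+1 else 0%N).
Definition prv (j : 'I_N.+1) : 'I_N.+1 := inord (if (0 < j)%N then j.-1 else N).

Lemma nxtE j : nxt j = (if (j < N)%N then j.+1 else 0%N) :> nat.
Proof. rewrite /nxt inordK //; case: ifP => //; lia. Qed.
Lemma prvE j : prv j = (if (0 < j)%N then j.-1 else N) :> nat.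
Proof. rewrite /prv inordK //; case: ifP => //; have := ltn_ord j; lia. Qed.

Lemma prvK : cancel prv nxt.
Proof. move=> j; apply: val_inj; rewrite /= nxtE prvE; have := ltn_ord j.
case: ifP; case: ifP; lia. Qed.
Lemma nxtK : cancel nxt prv.
Proof. move=> j; apply: val_inj; rewrite /= prvE nxtE; have := ltn_ord j.
case: ifP; case: ifP; lia. Qed.
End Aux.

Lemma sgn_eq (R : pzRingType) (a b t : nat) : (a + b = 2 * t)%N ->
  (-1) ^+ a = (-1) ^+ b :> R.
Proof.
move=> h; rewrite -signr_odd -[in RHS]signr_odd.
have : ~~ odd (a + b) by rewrite h oddM.
by rewrite oddD; case: (odd a); case: (odd b).
Qed.

Section Incr.
Variables (n k : nat).
Lemma incrP (c : {ffun 'I_k -> 'I_n}) :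
  reflect (forall a b : 'I_k, (a < b)%N -> (c a < c b)%N) (incr_map c).
Proof.
apply: (iffP forallP) => [h a b ab | h a].
  by have /forallP/(_ b)/implyP := h a; apply.
by apply/forallP => b; apply/implyP; apply: h.
Qed.

Lemma incr_le (c : {ffun 'I_k -> 'I_n}) (a b : 'I_k) : incr_map c -> (a <= b)%N -> (c a <= c b)%N.
Proof.
move=> /incrP h; rewrite leq_eqVlt => /orP [/eqP ab|ab]; last by apply/ltnW/h.
by rewrite (_ : a = b) //; apply: val_inj.
Qed.

Lemma incr_ge (c : {ffun 'I_k -> 'I_n}) (a : 'I_k) : incr_map c -> (a <= c a)%N.
Proof.
move=> /incrP h.
have H : forall m (Hm : (m < k)%N), (m <= c (Ordinal Hm))%N.
  elim=> [|m IH] Hm //.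
  have Hm' : (m < k)%N by apply: ltnW.
  have := IH Hm'.
  have : (c (Ordinal Hm') < c (Ordinal Hm))%N by apply: h => /=.
  lia.
by have := H a (ltn_ord a); rewrite (_ : Ordinal _ = a) //; apply: val_inj.
Qed.

Lemma cullis_signE (F : nzRingType) (c : {ffun 'I_k -> 'I_n}) : incr_map c ->
  cullis_sign F c = (-1) ^+ (\sum_(a < k) (c a : nat)) * (-1) ^+ (\sum_(a < k) (a : nat)).
Proof.
move=> ic; rewrite /cullis_sign.
have e : (\sum_(a < k) (c a - a) + \sum_(a < k) (a:nat) = \sum_(a < k) (c a : nat))%N.
  rewrite -big_split /=; apply: eq_bigr => a _; have := incr_ge a ic; lia.
rewrite -e -exprD; apply: (@sgn_eq _ _ _ (\sum_(a < k) (c a - a) + \sum_(a < k) (a:nat))%N); lia.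
Qed.
End Incr.

Section Rot.
Variables (F : fieldType) (N K : nat).
Local Notation n := N.+1.
Local Notation k := K.+1.
Local Notation fT := {ffun 'I_k -> 'I_n}.

Definition phi (c : fT) : fT :=
  [ffun a => nxt (c (if (N <= c ord_max)%N then prv a else a))].
Definition psi (d : fT) : fT :=
  [ffun a => prv (d (if (d ord0 == 0%N :> nat) then nxt a else a))].

Lemma phi_incr c : incr_map c -> incr_map (phi c).
Proof.
move=> ic; have hc := incrP _ ic; apply/incrP => a b ab; rewrite !ffunE.
have hm : (ord_max : 'I_k) = K :> nat by [].
have hN : (c ord_max <= N)%N by have := ltn_ord (c ord_max).
have ha := ltn_ord a; have hb := ltn_ord b.
case: ifP => hmx; rewrite !nxtE.
  have h1 := hc (prv a) (prv b); have h2 := hc (prv b) ord_max.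
  have h3 := @incr_le _ _ c (prv a) ord_max ic (leq_ord _).
  have h4 := @incr_le _ _ c (prv b) ord_max ic (leq_ord _).
  move: (prvE a) (prvE b) => pa pb.
  have hpb := ltn_ord (prv b).
  have h5 := @incr_le _ _ c ord_max (prv a) ic.
  move: pa pb; do 4 case: ifP; lia.
have h1 := hc a b; have h2 := @incr_le _ _ c b ord_max ic (leq_ord _).
do 2 case: ifP; lia.
Qed.

Lemma psi_incr d : incr_map d -> incr_map (psi d).
Proof.
move=> id; have hd := incrP _ id; apply/incrP => a b ab; rewrite !ffunE.
have hm : (ord0 : 'I_k) = 0%N :> nat by [].
have ha := ltn_ord a; have hb := ltn_ord b.
case: ifP => /eqP h0.
  have h1 := hd (nxt a) (nxt b).
  have h2 := hd ord0 (nxt a).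
  have h3 := @incr_le _ _ d (nxt b) ord0 id.
  have e1 := ltn_ord (d (nxt a)); have e2 := ltn_ord (d (nxt b)).
  move: (nxtE a) (nxtE b) (prvE (d (nxt a))) (prvE (d (nxt b))).
  do 4 case: ifP; lia.
have h1 := hd a b.
have h2 := @incr_le _ _ d ord0 a id (leq0n _).
have e1 := ltn_ord (d a); have e2 := ltn_ord (d b).
move: (prvE (d a)) (prvE (d b)); do 2 case: ifP; lia.
Qed.

Lemma psiK c : incr_map c -> psi (phi c) = c.
Proof.
move=> ic; apply/ffunP => a; rewrite [psi _ _]ffunE.
have hN : (c ord_max <= N)%N by have := ltn_ord (c ord_max).
case hmx: (N <= c ord_max)%N.
  have e : (N <= c (prv ord0))%N.
    have ep : prv ord0 = (ord_max : 'I_k) by apply: ord_inj; rewrite prvE.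
    by rewrite ep.
  have -> : (phi c ord0 == 0%N :> nat).
    by rewrite ffunE hmx nxtE; have := ltn_ord (c (prv ord0)); case: ifP => //; lia.
  by rewrite ffunE hmx nxtK nxtK.
have -> : (phi c ord0 == 0%N :> nat) = false.
  rewrite ffunE hmx nxtE.
  have := @incr_le _ _ c ord0 ord_max ic (leq0n _).
  case: ifP => //; lia.
by rewrite ffunE hmx nxtK.
Qed.

Lemma phiK d : incr_map d -> phi (psi d) = d.
Proof.
move=> id; apply/ffunP => a; rewrite [phi _ _]ffunE.
case: (nat_of_ord (d ord0) =P 0%N) => h0.
  have -> : (N <= psi d ord_max)%N.
    rewrite ffunE (_ : (d ord0 == 0%N :> nat)) ?h0 // prvE.
    have ep : nxt ord_max = (ord0 : 'I_k) by apply: ord_inj; rewrite nxtE /= ltnn.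
    by rewrite ep h0.
  by rewrite ffunE (_ : (d ord0 == 0%N :> nat)) ?h0 // prvK prvK.
have -> : (N <= psi d ord_max)%N = false.
  rewrite ffunE (_ : (d ord0 == 0%N :> nat) = false); last by apply/eqP.
  rewrite prvE.
  have := @incr_le _ _ d ord0 ord_max id (leq0n _).
  have := ltn_ord (d ord_max).
  case: ifP => //; lia.
by rewrite ffunE (_ : (d ord0 == 0%N :> nat) = false) ?prvK //; apply/eqP.
Qed.

Definition eps : F := (-1) ^+ (N.+1 + K.+1 + 1).
Definition Rm (X : 'M[F]_(n, k)) : 'M[F]_(n, k) :=
  \matrix_(j, b) ((if (j < N)%N then 1 else eps) * X (nxt j) b).

Lemma sumS (f : 'I_k -> nat) : (\sum_(a < k) (f a).+1 = \sum_(a < k) f a + k)%N.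
Proof.
rewrite (eq_bigr (fun a => f a + 1)%N); last by move=> a _; rewrite addn1.
by rewrite big_split /= sum1_card card_ord.
Qed.

Lemma pE (a : 'I_k) : lift_perm ord_max ord0 1 a = nxt a.
Proof.
case: (unliftP ord_max a) => [a'|] ->.
  rewrite lift_perm_lift perm1; apply: ord_inj; rewrite nxtE /= /bump /=.
  have := ltn_ord a'; move: (nat_of_ord a') => m /= hm.
  case: (leqP K m) => h /=; [lia | case: ifP => /=; lia].
by rewrite lift_perm_id; apply: ord_inj; rewrite nxtE /= ltnn.
Qed.

Variable hKe : ~~ odd K.

Lemma cullis_Rm (X : 'M[F]_(n, k)) : cullis_det (Rm X) = - cullis_det X.
Proof.
rewrite /cullis_det [in RHS](reindex_onto phi psi); last by move=> d; apply: phiK.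
rewrite -sumrN; apply: eq_big => c.
  apply/idP/andP => [ic|[/psi_incr h /eqP <-] //].
  by split; [apply: phi_incr | apply/eqP; apply: psiK].
move=> ic; have hc := incrP _ ic.
rewrite !cullis_signE ?phi_incr //.
set A := (\sum_(a < k) (c a : nat))%N.
set S := (\sum_(a < k) (phi c a : nat))%N.
set B := (\sum_(a < k) (a : nat))%N.
have hN : (c ord_max <= N)%N by have := ltn_ord (c ord_max).
have hle : forall a : 'I_k, (c a <= c ord_max)%N.
  by move=> a; apply: (@incr_le _ _ c a ord_max ic (leq_ord _)).
case hmx: (N <= c ord_max)%N.
-
  have hmx' : (N <= c ord_max)%N by rewrite hmx.
  have hS : (S + n = A + k)%N.
    rewrite /S (eq_bigr (fun a => (nxt (c (prv a)) : nat))); last first.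
      by move=> a _; rewrite ffunE hmx.
    have e : (\sum_(a < k) (nxt (c (prv a)) : nat) = \sum_(a < k) (nxt (c a) : nat))%N.
      by rewrite [RHS](reindex_inj (can_inj (@prvK K))).
    rewrite e.
    rewrite /A -sumS !big_ord_recr /= nxtE (_ : (c ord_max < N)%N = false); last first.
      by apply/negbTE; rewrite -leqNgt.
    rewrite (eq_bigr (fun a : 'I_K => (c (widen_ord (leqnSn K) a)).+1)); last first.
      move=> a _; rewrite nxtE.
      have := hc (widen_ord (leqnSn K) a) ord_max (ltn_ord a).
      by case: ifP => // h1 h2; rewrite (leq_trans h2 hN) in h1.
    have cmN : nat_of_ord (c ord_max) = N by apply/eqP; rewrite eqn_leq hN hmx.
    by rewrite cmN addn0.
  have hd : rowsub_of (Rm X) c = diag_mx (\row_(a < k) (if (a < K)%N then 1 else eps))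
       *m row_perm (lift_perm ord_max ord0 1) (rowsub_of X (phi c)).
    apply/matrixP => a b; rewrite mul_diag_mx !mxE pE ffunE hmx nxtK.
    congr (_ * _).
    have h1 := hc a ord_max.
    have h2 := @incr_le _ _ c ord_max a ic.
    case ha: (a < K)%N; case hca: (c a < N)%N => //.
      by rewrite (leq_trans (h1 ha) hN) in hca.
    have ea : a = ord_max by apply: ord_inj; move: ha; have := ltn_ord a; rewrite /=; lia.
    by rewrite ea ltnNge hmx in hca.
  rewrite hd det_mulmx det_diag row_permE det_mulmx det_perm odd_lift_perm odd_perm1.
  rewrite /= (negbTE hKe) /= expr0 mul1r.
  rewrite big_ord_recr /= big1; last by move=> a _; rewrite mxE /= ltn_ord.
  rewrite mxE ltnn mul1r.
  have h : (-1) ^+ A * eps = - (-1) ^+ S :> F.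
    have e2 : - (-1) ^+ S = (-1) ^+ S.+1 :> F by rewrite exprS mulN1r.
    rewrite /eps -exprD e2.
    by apply: (@sgn_eq _ _ _ (S + n + 1)); lia.
  set D := \det _.
  transitivity (((-1) ^+ A * eps) * ((-1) ^+ B * D)); first ring.
  rewrite h; ring.
- have hmx' : (c ord_max < N)%N by rewrite ltnNge hmx.
  have hlt : forall a : 'I_k, (c a < N)%N := fun a => leq_ltn_trans (hle a) hmx'.
  have hS : (S = A + k)%N.
    rewrite /S /A -sumS; apply: eq_bigr => a _; rewrite ffunE hmx nxtE.
    by rewrite hlt.
  have hd : rowsub_of (Rm X) c = rowsub_of X (phi c).
    apply/matrixP => a b; rewrite !mxE ffunE hmx.
    by rewrite hlt mul1r.
  rewrite hd hS exprD.
  have ek : (-1) ^+ k = -1 :> F by rewrite -signr_odd /= (negbTE hKe) /= expr1.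
  rewrite ek.
  set D := \det _.
  ring.
Qed.
End Rot.

Section Iter.
Variables (F : fieldType) (N K : nat).
Local Notation n := N.+1.
Local Notation k := K.+1.

Definition rt (m : nat) (j : 'I_n) : 'I_n := inord ((m + j) %% n)%N.
Lemma rtE m j : rt m j = ((m + j) %% n)%N :> nat.
Proof. by rewrite /rt inordK // ltn_pmod. Qed.

Lemma eps2 : eps F N K * eps F N K = 1.
Proof. rewrite /eps -exprD (@sgn_eq _ _ 0 (N.+1 + K.+1 + 1)%N) ?expr0 //; lia. Qed.

Lemma iterRm m (X : 'M[F]_(n, k)) : (m < n)%N ->
  iter m (@Rm F N K) X =
  \matrix_(j, b) ((if (m + j < n)%N then 1 else eps F N K) * X (rt m j) b).
Proof.
elim: m => [|m IH] hm.
  apply/matrixP => j b; rewrite mxE /= ltn_ord mul1r; congr (X _ b).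
  by apply: ord_inj; rewrite rtE add0n modn_small.
rewrite iterS IH; last by lia.
apply/matrixP => j b; rewrite !mxE.
have er : rt m (nxt j) = rt m.+1 j.
  apply: ord_inj; rewrite !rtE nxtE; case: ifP => hj.
    by rewrite addnS addSn.
  have ej : (j : nat) = N by have := ltn_ord j; lia.
  by rewrite ej addn0 addSn -addnS modnDr.
rewrite er mulrA; congr (_ * _).
rewrite nxtE; case: ifP => hj.
  by rewrite mul1r addnS addSn.
have ej : (j : nat) = N by have := ltn_ord j; lia.
rewrite ej addn0 (_ : (m < n)%N) ?mulr1; last by lia.
by rewrite (_ : (m.+1 + N < n)%N = false) //; lia.
Qed.

Lemma rt_inj (i0 : 'I_n) : injective (rt i0).
Proof.
move=> j1 j2 /(congr1 (@nat_of_ord _)); rewrite !rtE => /eqP; rewrite eqn_modDl => /eqP.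
by rewrite !modn_small // => e; apply: ord_inj.
Qed.
End Iter.

Lemma Rm_bij (F : fieldType) (N K : nat) : bijective (@Rm F N K).
Proof.
pose sg (j : 'I_N.+1) : F := if (j < N)%N then 1 else eps F N K.
have sg2 : forall j, sg j * sg j = 1.
  by move=> j; rewrite /sg; case: ifP => _; rewrite ?mulr1 ?eps2.
exists (fun Y : 'M[F]_(N.+1, K.+1) => \matrix_(j, b) (sg (prv j) * Y (prv j) b)).
  move=> X; apply/matrixP => j b; rewrite !mxE prvK mulrA.
  by rewrite -/(sg (prv j)) sg2 mul1r.
move=> Y; apply/matrixP => j b; rewrite !mxE nxtK mulrA.
by rewrite -/(sg j) sg2 mul1r.
Qed.

Lemma iter_bij (T : Type) (f : T -> T) m : bijective f -> bijective (fun x => iter m f x).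
Proof.
move=> hf; elim: m => [|m IH]; first by exists id.
exact: bij_comp hf IH.
Qed.

Lemma cullis_iter (F : fieldType) (N K : nat) m (X : 'M[F]_(N.+1, K.+1)) :
  ~~ odd K -> cullis_det (iter m (@Rm F N K) X) = (-1) ^+ m * cullis_det X.
Proof.
move=> hK; elim: m => [|m IH]; first by rewrite expr0 mul1r.
by rewrite iterS cullis_Rm // IH exprS mulN1r mulNr.
Qed.

Lemma sgn2 (F : fieldType) (m : nat) : (-1) ^+ m * (-1) ^+ m = 1 :> F.
Proof. by rewrite -exprD (@sgn_eq _ _ 0 m) ?expr0 //; lia. Qed.

Unset Implicit Arguments.

Theorem mainTheorem18 (F : fieldType) (n k : nat) (i0 : 'I_n) :
  odd k -> (1 <= k)%N -> (k <= n)%N ->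
  exists S : 'M[F]_(n, k) -> 'M[F]_(n, k),
    [/\ linear S, bijective S,
        (forall (X : 'M[F]_(n, k)) (z : 'rV[F]_n),
            z *m X = 0 -> zcirc k i0 z *m S X = 0),
        (forall X : 'M[F]_(n, k), cullis_det X = 0 -> cullis_det (S X) = 0)
      & (forall X : 'M[F]_(n, k), alt_row_sum (S X) = 0 -> alt_row_sum X = 0)].
Proof.
case: k => [//|K] hk _.
case: n i0 => [[]//|N] i0 hkn.
have hKe : ~~ odd K := hk.
have hK2 : K = (2 * K./2)%N.
  by have := odd_double_half K; rewrite (negbTE hKe) add0n -mul2n.
set t := K./2 in hK2.
have hi : (i0 < N.+1)%N := ltn_ord i0.
exists (fun X => iter i0 (@Rm F N K) X); split.
- move=> a u v /=; rewrite !iterRm //; apply/matrixP => j b; rewrite !mxE; ring.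
- exact: iter_bij (@Rm_bij F N K).
- move=> X z hz.
  suff -> : zcirc K.+1 i0 z *m iter i0 (@Rm F N K) X = z *m X by [].
  apply/matrixP => i b; rewrite !mxE iterRm //.
  rewrite [RHS](reindex_inj (@rt_inj N i0)); apply: eq_bigr => j _.
  rewrite /zcirc !mxE (ord1 i).
  have -> : rot_ord i0 j = rt i0 j by apply: ord_inj; rewrite rtE.
  rewrite mulrACA; case: ifP => _; first by rewrite mulr1 mul1r.
  by rewrite eps2 mul1r.
- by move=> X h0; rewrite cullis_iter // h0 mulr0.
- move=> X h.
  have e : alt_row_sum (iter i0 (@Rm F N K) X) = (-1) ^+ i0 *: alt_row_sum X.
    rewrite /alt_row_sum iterRm // scaler_sumr.
    rewrite [in RHS](reindex_inj (@rt_inj N i0)); apply: eq_bigr => j _.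
    set M := \matrix_(_, _) _.
    have -> : row j M = (if (i0 + j < N.+1)%N then 1 else eps F N K) *: row (rt i0 j) X.
      by apply/rowP => b; rewrite !mxE.
    rewrite !scalerA; congr (_ *: _).
    rewrite rtE; case: ifP => hij.
      rewrite modn_small // mulr1 -!exprD.
      by apply: (@sgn_eq _ _ _ (i0 + j + 1)%N); lia.
    have hr : ((i0 + j) %% N.+1 = i0 + j - N.+1)%N.
      rewrite -{1}(@subnK N.+1 (i0 + j)); last by lia.
      by rewrite modnDr modn_small //; have := ltn_ord j; lia.
    rewrite hr /eps -!exprD.
    by apply: (@sgn_eq _ _ _ (j + i0 + t + 2)%N); lia.
  rewrite -[alt_row_sum X]scale1r -(sgn2 F i0) -scalerA -e h scaler0 //.
Qed.
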